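(* If a hyperplane arrangement $\mathcal{H}\subset\mathbb{CP}^n$ is essential and irreducible, then there exist weights $a_H>0$ ($H\in\mathcal{H}$) such that for every $L\in\mathcal{L}$, $$\sum_{H\supset L}a_H<\frac{\operatorname{codim}L}{n+1}\sum_{H\in\mathcal{H}}a_H .$$
   Context: $\mathcal{H}$ is a finite set of distinct hyperplanes; $\mathcal{L}$ is the set of non-empty proper intersections of its members. $\mathcal{H}$ is essential if $\bigcap_HH=\emptyset$. A splitting is a decomposition $\mathcal{H}=\mathcal{H}_1\cup\mathcal{H}_2$ whose centres (intersections of members; $\mathbb{CP}^n$ for the empty collection) $T_1,T_2$ satisfy $T_1+T_2=\mathbb{CP}^n$ (projective span); non-trivial if both parts are non-empty; $\mathcal{H}$ is irreducible if it has no non-trivial splitting. *)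

(* Defs.v *)
(* Projective space CP^n is modelled linearly: a projective
   subspace of CP^n = P(C^(n+1)) is represented by a linear subspace of
   C^(n+1) = 'rV[C]_(n.+1) (mxalgebra row spaces), with C = R[i] for an
   arbitrary R : realType (every realType is a model of the reals, so R[i]
   is the field of complex numbers). *)
From HB Require Import structures.
From mathcomp Require Import all_boot all_order all_algebra.
From mathcomp Require Import reals complex.
Set Implicit Arguments. Unset Strict Implicit. Unset Printing Implicit Defensive.
Import Order.TTheory GRing.Theory Num.Theory.
Local Open Scope ring_scope.

Definition is_hyperplane (F : fieldType) (n : nat) (H : 'M[F]_(n.+1)) : bool :=
  \rank H == n.

Definition arrangement (F : fieldType) (n : nat) (I : finType)
    (Hs : I -> 'M[F]_(n.+1)) : Prop :=
  (forall i, is_hyperplane (Hs i)) /\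
  (forall i j, i != j -> ~~ (Hs i == Hs j)%MS).

(* Centre of a sub-collection S: intersection of its members; full space
   (= CP^n) for the empty collection. *)
Definition centre (F : fieldType) (n : nat) (I : finType)
    (Hs : I -> 'M[F]_(n.+1)) (S : {set I}) : 'M[F]_(n.+1) :=
  (\bigcap_(i in S) Hs i)%MS.

(* Projective subspace is empty iff the linear subspace is 0. *)
Definition proj_empty (F : fieldType) (n : nat) (T : 'M[F]_(n.+1)) : bool :=
  \rank T == 0%N.

Definition essential (F : fieldType) (n : nat) (I : finType)
    (Hs : I -> 'M[F]_(n.+1)) : Prop :=
  proj_empty (centre Hs setT).

Definition splitting (F : fieldType) (n : nat) (I : finType)
    (Hs : I -> 'M[F]_(n.+1)) (S : {set I}) : Prop :=
  (centre Hs S + centre Hs (~: S) == 1%:M)%MS.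

Definition irreducible_arr (F : fieldType) (n : nat) (I : finType)
    (Hs : I -> 'M[F]_(n.+1)) : Prop :=
  forall S : {set I}, S != set0 -> ~: S != set0 -> ~ splitting Hs S.

(* L is in the intersection poset: L = centre of a non-empty sub-collection,
   and L is non-empty (proper since the sub-collection is non-empty). *)
Definition in_poset (F : fieldType) (n : nat) (I : finType)
    (Hs : I -> 'M[F]_(n.+1)) (L : 'M[F]_(n.+1)) : Prop :=
  exists S : {set I}, S != set0 /\ ~~ proj_empty (centre Hs S) /\
    (L == centre Hs S)%MS.

Definition pcodim (F : fieldType) (n : nat) (L : 'M[F]_(n.+1)) : nat :=
  n.+1 - \rank L.

(* Main.v *)
Require Import Defs.
From HB Require Import structures.
From mathcomp Require Import all_boot all_order all_algebra.
From mathcomp Require Import reals complex.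
From mathcomp Require Import zify ring.
Import Order.TTheory GRing.Theory Num.Theory.
Local Open Scope ring_scope.
Set Implicit Arguments. Unset Strict Implicit.

Lemma sub_centre (F : fieldType) (n : nat) (I : finType) (Hs : I -> 'M[F]_(n.+1))
  m (M : 'M[F]_(m, n.+1)) (S : {set I}) :
  (M <= centre Hs S)%MS = [forall i in S, M <= Hs i]%MS.
Proof.
apply/sub_bigcapmxP/forall_inP => h i /h //.
Qed.

Lemma centreS (F : fieldType) (n : nat) (I : finType) (Hs : I -> 'M[F]_(n.+1))
  (S T : {set I}) : S \subset T -> (centre Hs T <= centre Hs S)%MS.
Proof.
move=> sST; rewrite sub_centre; apply/forall_inP => i iS.
by move: (submx_refl (centre Hs T)); rewrite sub_centre => /forall_inP; apply; apply: (subsetP sST).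
Qed.

Lemma centre_mem (F : fieldType) (n : nat) (I : finType) (Hs : I -> 'M[F]_(n.+1))
  (S : {set I}) i : i \in S -> (centre Hs S <= Hs i)%MS.
Proof. by move=> iS; move: (submx_refl (centre Hs S)); rewrite sub_centre => /forall_inP; apply. Qed.

Lemma centreU1 (F : fieldType) (n : nat) (I : finType) (Hs : I -> 'M[F]_(n.+1))
  (S : {set I}) x : (centre Hs (x |: S) == Hs x :&: centre Hs S)%MS.
Proof.
apply/andP; split.
  by rewrite sub_capmx centre_mem ?setU11 //= centreS // subsetUr.
rewrite sub_centre; apply/forall_inP => i; rewrite in_setU1 => /orP[/eqP->|iS].
  exact: capmxSl.
by apply: (submx_trans _ (centre_mem Hs iS)); apply: capmxSr.
Qed.

Lemma centreU (F : fieldType) (n : nat) (I : finType) (Hs : I -> 'M[F]_(n.+1))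
  (S T : {set I}) : (centre Hs (S :|: T) == centre Hs S :&: centre Hs T)%MS.
Proof.
apply/andP; split.
  by rewrite sub_capmx !centreS ?subsetUl ?subsetUr.
rewrite sub_centre; apply/forall_inP => i; rewrite in_setU => /orP[iS|iT].
  by apply: (submx_trans _ (centre_mem Hs iS)); apply: capmxSl.
by apply: (submx_trans _ (centre_mem Hs iT)); apply: capmxSr.
Qed.

Lemma drop1 (F : fieldType) (n : nat) (U H : 'M[F]_(n.+1)) :
  \rank H = n -> ~~ (U <= H)%MS -> \rank (H :&: U) = (\rank U).-1 /\ (0 < \rank U)%N.
Proof.
move=> rH nUH.
have := mxrank_sum_cap U H; rewrite capmxC rH.
have r1 := rank_leq_col (U + H)%MS.
have r2 : (n < \rank (U + H))%N.
  rewrite -{1}rH; rewrite (ltn_leqif (mxrank_leqif_sup (addsmxSr U H))).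
  apply: contra nUH => h; exact: submx_trans (addsmxSl U H) h.
have r3 : (0 < \rank U)%N.
  case: (posnP (\rank U)) => // /eqP; rewrite mxrank_eq0 => /eqP U0.
  by rewrite U0 sub0mx in nUH.
move=> e; split => //; lia.
Qed.

Lemma eqb_trans (F : fieldType) n (A B C : 'M[F]_n) :
  (A == B)%MS -> (B == C)%MS -> (A == C)%MS.
Proof. by move=> /eqmxP h1 /eqmxP h2; apply/eqmxP; exact: eqmx_trans h1 h2. Qed.
Lemma eqb_sym (F : fieldType) n (A B : 'M[F]_n) : (A == B)%MS -> (B == A)%MS.
Proof. by move=> /eqmxP h1; apply/eqmxP; exact: eqmx_sym h1. Qed.

Lemma ext (F : fieldType) (n : nat) (I : finType) (Hs : I -> 'M[F]_(n.+1))
  (hyp : forall i, \rank (Hs i) = n) (A C : {set I}) :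
  exists D : {set I}, [/\ D \subset C, (forall d, d \in D -> d \notin A),
    (#|D| + \rank (centre Hs (A :|: C)))%N = \rank (centre Hs A) &
    (centre Hs (A :|: D) == centre Hs (A :|: C))%MS].
Proof.
move: {2}#|C| (erefl #|C|) => k; elim: k C => [|k IH] C hC.
  move/eqP: hC; rewrite cards_eq0 => /eqP ->.
  exists set0; split; rewrite ?sub0set ?cards0 ?setU0 ?eqmx_refl //.
  by move=> d; rewrite in_set0.
  by apply/andP; split; apply: submx_refl.
have : (0 < #|C|)%N by rewrite hC.
rewrite card_gt0 => /set0Pn[x xC].
have hC' : #|C :\ x| = k by move: hC; rewrite (cardsD1 x) xC => -[].
have eC : A :|: C = x |: (A :|: C :\ x) by rewrite setUCA setD1K.
have [D' [sD' dD' cD' eD']] := IH _ hC'.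
set U := centre Hs (A :|: C :\ x).
have eAC : (centre Hs (A :|: C) == Hs x :&: U)%MS by rewrite eC centreU1.
have xD' : x \notin D'.
  by apply/negP => /(subsetP sD'); rewrite setD11.
have sD'C : D' \subset C by apply: subset_trans sD' (subsetDl C [set x]).
have [xU|nxU] := boolP (U <= Hs x)%MS.
  have eU : (Hs x :&: U == U)%MS.
    by apply/andP; split; rewrite ?capmxSr // sub_capmx xU submx_refl.
  exists D'; split => //.
    by rewrite (eqmx_rank eAC) (eqmx_rank eU).
  exact: eqb_trans eD' (eqb_sym (eqb_trans eAC eU)).
have [r1 r2] := drop1 (hyp x) nxU.
exists (x |: D'); split.
- by rewrite subUset sub1set xC.
- move=> d; rewrite in_setU1 => /orP[/eqP->|]; last exact: dD'.
  apply: contra nxU => xA; apply: centre_mem; by rewrite in_setU xA.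
- rewrite cardsU1 xD' (eqmx_rank eAC) r1 -cD' -/U /=; lia.
- rewrite setUCA.
  apply: eqb_trans (centreU1 _ _ _) _.
  apply: eqb_trans _ (eqb_sym eAC).
  by apply/andP; split; apply: capmxS => //; rewrite ?submx_refl //; move/andP: eD' => [].
Qed.

Lemma arith1 (n x g s f l : nat) : s = (f + g)%N -> (s <= n)%N -> (l <= f)%N -> (x <= g)%N -> (x < n.+1 - l)%N.
Proof. lia. Qed.
Lemma arith2 (a b c d : nat) : (a < c)%N -> (b <= d)%N -> (a + b < c + d)%N.
Proof. lia. Qed.

Theorem corollaryB2 (R : realType) (n : nat) (I : finType)
    (Hs : I -> 'M[R[i]]_(n.+1)) :
  arrangement Hs -> essential Hs -> irreducible_arr Hs ->
  exists a : I -> R, (forall i, 0 < a i) /\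
    forall L : 'M[R[i]]_(n.+1), in_poset Hs L ->
      \sum_(i | (L <= Hs i)%MS) a i <
        ((pcodim L)%:R / (n.+1)%:R) * \sum_(i : I) a i.
Proof.
move=> [hyp _] ess irr.
have hypr : forall i, \rank (Hs i) = n by move=> i; apply/eqP; exact: hyp i.
have rT : \rank (centre Hs setT) = 0%N by apply/eqP; exact: ess.
pose Bs := [set B : {set I} | (#|B| == n.+1) && (\rank (centre Hs B) == 0%N)].
pose cnt i := (\sum_(B in Bs) (i \in B))%N.
have key : forall P : pred I,
    (\sum_(i | P i) cnt i = \sum_(B in Bs) #|B :&: [set i | P i]|)%N.
  move=> P; rewrite /cnt exchange_big /=; apply: eq_bigr => B _.
  have -> : B :&: [set i | P i] = [set i | P i && (i \in B)].
    by apply/setP => i; rewrite !inE andbC.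
  rewrite -sum1dep_card big_mkcondr /=; apply: eq_bigr => i _.
  by case: (i \in B).
exists (fun i => (cnt i)%:R); split.
  move=> i; rewrite ltr0n.
  have [D [_ dD cD eD]] := ext hypr [set i] setT.
  have iD : i \notin D by apply/negP => /dD; rewrite set11.
  have B0in : (i |: D) \in Bs.
    rewrite inE cardsU1 iD (eqmx_rank eD) setUT rT eqxx andbT.
    move: cD; rewrite setUT rT /centre big_set1 hypr => <-.
    by rewrite addn0 add1n.
  by rewrite /cnt (bigD1 (i |: D)) //= setU11.
move=> L [S [Sne [Snemp eLS]]].
pose Fs := [set i | (L <= Hs i)%MS].
have rL : \rank L = \rank (centre Hs S) by exact: eqmx_rank eLS.
have LcS : (L <= centre Hs S)%MS by move/andP: eLS => [].
have LcSub : forall T : {set I}, T \subset Fs -> (L <= centre Hs T)%MS.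
  move=> T sT; rewrite sub_centre; apply/forall_inP => i /(subsetP sT).
  by rewrite inE.
have SF : S \subset Fs.
  apply/subsetP => i iS; rewrite inE.
  exact: submx_trans LcS (centre_mem Hs iS).
have Fne : Fs != set0.
  apply: contraNneq Sne => F0; apply/eqP; apply/setP => i; rewrite in_set0.
  by apply/negP => /(subsetP SF); rewrite F0 in_set0.
have rL0 : (0 < \rank L)%N by rewrite rL lt0n; exact: Snemp.
have Gne : ~: Fs != set0.
  apply/negP => /eqP G0.
  have : (L <= centre Hs setT)%MS.
    apply: LcSub; apply/subsetP => i _.
    apply/negPn; rewrite -in_setC G0 in_set0 //.
  move/mxrankS; rewrite rT; lia.
have nspl := irr Fs Fne Gne.
set cF := centre Hs Fs; set cG := centre Hs (~: Fs).
have rsum : (\rank (cF + cG) <= n)%N.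
  have := rank_leq_col (cF + cG)%MS; rewrite leq_eqVlt => /orP[/eqP e|]; last by [].
  exfalso; apply: nspl; rewrite /splitting -/cF -/cG.
  by apply/andP; split; rewrite ?submx1 // sub1mx /row_full e.
have rcap : \rank (cF :&: cG) = 0%N.
  by rewrite -(eqmx_rank (centreU Hs Fs (~: Fs))) setUCr rT.
have rFG := mxrank_sum_cap cF cG.
have rLF : (\rank L <= \rank cF)%N by apply: mxrankS; apply: LcSub.
have bnd : forall B, B \in Bs -> (#|B :&: Fs| <= pcodim L)%N.
  move=> B; rewrite inE => /andP[/eqP cB /eqP rB].
  have [D [sD _ cD _]] := ext hypr (B :&: Fs) (B :\: Fs).
  move: cD; rewrite setID rB addn0 => cD.
  have := subset_leq_card sD; have := cardsID Fs B; rewrite cB.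
  have : (\rank L <= \rank (centre Hs (B :&: Fs)))%N.
    by apply: mxrankS; apply: LcSub; apply: subsetIr.
  rewrite /pcodim; lia.
have [D1 [sD1 _ cD1 eD1]] := ext hypr set0 (~: Fs).
move: cD1 eD1; rewrite !set0U /centre big_set0 mxrank1 -/(centre Hs (~: Fs)) -/cG => cD1 eD1.
have [D2 [_ dD2 cD2 eD2]] := ext hypr D1 setT.
move: cD2; rewrite setUT rT addn0 (eqmx_rank eD1) => cD2.
have B0in : (D1 :|: D2) \in Bs.
  rewrite inE (eqmx_rank eD2) setUT rT eqxx andbT cardsU.
  have -> : D1 :&: D2 = set0.
    apply/setP => d; rewrite !inE; apply/negP => /andP[h1 h2].
    by move: (dD2 _ h2); rewrite h1.
  by rewrite cards0 subn0 cD2 cD1.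
have b0 : (#|(D1 :|: D2) :&: Fs| < pcodim L)%N.
  have : (#|(D1 :|: D2) :&: Fs| <= #|D2|)%N.
    apply: subset_leq_card; apply/subsetP => d; rewrite !inE => /andP[/orP[h|h] hF] //.
    by move: (subsetP sD1 d h); rewrite !inE hF.
  rewrite /pcodim cD2; move: rFG; rewrite rcap addn0 => rFG.
  exact: (arith1 rFG rsum rLF).
rewrite -!natr_sum key.
have -> : (\sum_(i : I) cnt i = \sum_(B in Bs) #|B :&: [set i | true]|)%N by rewrite -key.
have -> : (\sum_(B in Bs) #|B :&: [set i | true]| = \sum_(B in Bs) n.+1)%N.
  apply: eq_bigr => B; rewrite inE => /andP[/eqP cB _].
  by rewrite -cB; apply: eq_card => i; rewrite !inE andbT.
rewrite sum_nat_const.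
have -> : (pcodim L)%:R / (n.+1)%:R * ((#|Bs| * n.+1)%:R : R) = (pcodim L * #|Bs|)%:R.
  have hn : 1 + n%:R != 0 :> R by rewrite addrC natr1 pnatr_eq0.
  by rewrite !natrM; field.

rewrite Num.Theory.ltr_nat -/Fs.
have e2 : (pcodim L * #|Bs| = \sum_(B in Bs) pcodim L)%N by rewrite sum_nat_const mulnC.
rewrite e2 (bigD1 (D1 :|: D2)) //= [X in (_ < X)%N](bigD1 (D1 :|: D2)) //=.
have : (\sum_(B in Bs | B != D1 :|: D2) #|B :&: Fs| <= \sum_(B in Bs | B != D1 :|: D2) pcodim L)%N.
  by apply: leq_sum => B /andP[hB _]; apply: bnd.
exact: arith2.
Qed.
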